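(* Write $\chi_n^*(M_{1,2}(F))=\sum m_{\langle\lambda\rangle}\chi_{\langle\lambda\rangle}$, the sum over multipartitions $\langle\lambda\rangle=(\lambda(1),\lambda(2),\lambda(3),\lambda(4))\vdash n$ with $h(\lambda(1))\le2$, $h(\lambda(2))\le3$, $h(\lambda(3))\le2$, $h(\lambda(4))\le2$. Let $\langle\lambda\rangle=(\emptyset,\lambda(2),\lambda(3),\lambda(4))$ with $\lambda(2)=(\gamma_1+\gamma_2+\gamma_3,\gamma_2+\gamma_3,\gamma_3)\neq\emptyset$, $\lambda(3)=(w_1+w_2,w_2)\neq\emptyset$, $\lambda(4)=(\rho_1+\rho_2,\rho_2)\neq\emptyset$ (all $\gamma_i,w_i,\rho_i\ge0$ integers), and let $l=\max\{w_1,\rho_1\}$. If either $|w_1-\rho_1|\le2$, or $|w_1-\rho_1|\ge3$ and $\gamma_1+\gamma_2\ge\lceil l/2\rceil-1$, then $m_{\langle\lambda\rangle}\neq0$.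
   Context: $F$ is a field of characteristic zero. $M_{1,2}(F)$ is $M_3(F)$ with $\mathbb{Z}_2$-grading with even part spanned by $e_{11},e_{22},e_{23},e_{32},e_{33}$, odd part by $e_{12},e_{13},e_{21},e_{31}$, and orthosymplectic superinvolution $*$ sending the matrix with rows $(a,b,c),(d,e,f),(g,h,i)$ to the matrix with rows $(a,-g,d),(c,i,-f),(-b,-h,e)$. Its even symmetric, even skew, odd symmetric, odd skew parts are $\mathrm{span}\{e_{11},e_{22}+e_{33}\}$, $\mathrm{span}\{e_{22}-e_{33},e_{23},e_{32}\}$, $\mathrm{span}\{e_{12}-e_{31},e_{13}+e_{21}\}$, $\mathrm{span}\{e_{12}+e_{31},e_{13}-e_{21}\}$. In the free $*$-superalgebra on variables $y_i^+,y_i^-,z_i^+,z_i^-$ (even symmetric, even skew, odd symmetric, odd skew), a $*$-identity is a polynomial vanishing under all substitutions of the variables by elements of the corresponding parts; $Id_2^*$ denotes the set of them. $P_n^*$ is the span of the monomials $w_{\sigma(1)}\cdots w_{\sigma(n)}$, $\sigma\in S_n$, $w_i\in\{y_i^+,y_i^-,z_i^+,z_i^-\}$. The group $\mathbb{H}_n=(\mathbb{Z}_2\times\mathbb{Z}_2)\wr S_n$, with $\mathbb{Z}_2\times\mathbb{Z}_2=\{1,*,\zeta,*\zeta\}$, acts on $P_n^*$: $h=(a_1,\dots,a_n;\sigma)$ sends $y_i^+\mapsto y_{\sigma(i)}^+$, $y_i^-\mapsto \pm y_{\sigma(i)}^-$ (sign $+$ iff $a_{\sigma(i)}\in\{1,\zeta\}$),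 $z_i^+\mapsto\pm z_{\sigma(i)}^+$ ($+$ iff $a_{\sigma(i)}\in\{1,*\}$), $z_i^-\mapsto\pm z_{\sigma(i)}^-$ ($+$ iff $a_{\sigma(i)}\in\{1,*\zeta\}$). The character of $P_n^*/(P_n^*\cap Id_2^*(M_{1,2}(F)))$ is the $n$-th $*$-cocharacter $\chi_n^*(M_{1,2}(F))$. Irreducible $\mathbb{H}_n$-characters $\chi_{\langle\lambda\rangle}$ correspond to multipartitions $\langle\lambda\rangle=(\lambda(1),\dots,\lambda(4))$, $\lambda(i)\vdash n_i$, $\sum n_i=n$, with $\lambda(1),\dots,\lambda(4)$ corresponding to the variable types $y^+,y^-,z^+,z^-$; equivalently $m_{\langle\lambda\rangle}$ is the multiplicity of $\chi_{\lambda(1)}\otimes\cdots\otimes\chi_{\lambda(4)}$ in the $S_{n_1}\times\cdots\times S_{n_4}$-character of the multilinear polynomials with $n_1,\dots,n_4$ variables of the four types modulo identities. $h(\mu)$ is the height of a partition $\mu$; $\emptyset$ is the empty partition; $\lceil c\rceil$ is the least integer $\ge c$. *)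

(* Defs.v *)
From HB Require Import structures.
From mathcomp Require Import all_boot all_order all_algebra all_fingroup.
From mathcomp Require Import boolp.
Set Implicit Arguments. Unset Strict Implicit. Unset Printing Implicit Defensive.
Import GRing.Theory.

Section Defs.
Variable F : fieldType.
Local Open Scope ring_scope.

(** Entries of a 3x3 matrix, indexed by nat (0-based: row 0 is row 1 of the paper). *)
Definition ent (A : 'M[F]_3) (i j : nat) : F := A (inord i) (inord j).

Definition mx3 (a b c d e f g h k : F) : 'M[F]_3 :=
  \matrix_(r < 3, s < 3)
    nth 0 (nth [::] [:: [:: a; b; c]; [:: d; e; f]; [:: g; h; k]] r) s.

Definition superstar (A : 'M[F]_3) : 'M[F]_3 :=
  mx3 (ent A 0 0) (- ent A 2 0) (ent A 1 0)
      (ent A 0 2) (ent A 2 2) (- ent A 1 2)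
      (- ent A 0 1) (- ent A 2 1) (ent A 1 1).

Definition is_even (A : 'M[F]_3) : bool :=
  [&& ent A 0 1 == 0, ent A 0 2 == 0, ent A 1 0 == 0 & ent A 2 0 == 0].
Definition is_odd (A : 'M[F]_3) : bool :=
  [&& ent A 0 0 == 0, ent A 1 1 == 0, ent A 1 2 == 0, ent A 2 1 == 0
    & ent A 2 2 == 0].

(** Variable types: 0 = y^+ (even symmetric), 1 = y^- (even skew),
    2 = z^+ (odd symmetric), 3 = z^- (odd skew). *)
Definition in_part (t : nat) (A : 'M[F]_3) : bool :=
  match t with
  | 0 => is_even A && (superstar A == A)
  | 1 => is_even A && (superstar A == - A)
  | 2 => is_odd A && (superstar A == A)
  | _ => is_odd A && (superstar A == - A)
  end.

(** Multilinear polynomials in n variables x_0..x_{n-1}: linear combinations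
    of the monomials x_{s(0)} ... x_{s(n-1)}, s a permutation; represented by
    their coefficient function. *)
Local Notation mlpoly n := {ffun {perm 'I_n} -> F}.

Definition eval (n : nat) (f : mlpoly n) (A : 'I_n -> 'M[F]_3) : 'M[F]_3 :=
  \sum_(s : {perm 'I_n}) f s *: \prod_(k < n) A (s k).

(** Action of t in S_n relabelling variables x_i |-> x_{t(i)}:
    monomial s |-> t o s  (= s * t in mathcomp's convention). *)
Definition act (n : nat) (t : {perm 'I_n}) (f : mlpoly n) : mlpoly n :=
  [ffun s => f (s * t^-1)%g].

(** Multipartition lam = (lam(1),...,lam(4)) (list of 4 partitions, each a
    list of row lengths).  The cells (block, row, column) of the canonical
    multitableau, numbered consecutively row by row, block by block.
    Variable number i is the i-th cell; its type is its block. *)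
Definition cells (lam : seq (seq nat)) : seq (nat * nat * nat) :=
  flatten [seq flatten [seq [seq (b, r, c) | c <- iota 0 (nth 0 (nth [::] lam b) r)]
                       | r <- iota 0 (size (nth [::] lam b))]
          | b <- iota 0 (size lam)].

Section Mult.
Variable lam : seq (seq nat).
Local Notation n := (size (cells lam)).

Definition cell (i : 'I_n) : nat * nat * nat := nth (0, 0, 0)%N (cells lam) i.
Definition blk (i : 'I_n) : nat := (cell i).1.1.
Definition rowkey (i : 'I_n) : nat * nat := ((cell i).1.1, (cell i).1.2).
Definition colkey (i : 'I_n) : nat * nat := ((cell i).1.1, (cell i).2).

Definition is_star_identity (f : mlpoly n) : Prop :=
  forall A : 'I_n -> 'M[F]_3, (forall i, in_part (blk i) (A i)) -> eval f A = 0.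

Definition rowgrp : {set {perm 'I_n}} :=
  [set p : {perm 'I_n} | [forall i, rowkey (p i) == rowkey i]].
Definition colgrp : {set {perm 'I_n}} :=
  [set p : {perm 'I_n} | [forall i, colkey (p i) == colkey i]].

Definition young (f : mlpoly n) : mlpoly n :=
  [ffun s => \sum_(r in rowgrp) \sum_(c in colgrp)
                ((-1) ^+ odd_perm c) * act r (act c f) s].

Definition mult_ge (k : nat) : Prop :=
  exists fs : 'I_k -> mlpoly n,
    forall cs : 'I_k -> F,
      is_star_identity [ffun s => \sum_(j < k) cs j * young (fs j) s] -> forall j, cs j = 0.

(** m_<lam> = dim e (P_{n1..n4} / (P_{n1..n4} cap Id^star)), which is the
    multiplicity of chi_{lam(1)} (x) ... (x) chi_{lam(4)}. *)
Definition mult : nat := (\max_(k < (factorial n).+1 | `[< mult_ge k >]) k)%N.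

End Mult.
End Defs.

Definition absdiff (a b : nat) : nat := (a - b + (b - a))%N.

(* Main.v *)
Require Import Defs.
From HB Require Import structures.
From mathcomp Require Import all_boot all_order all_algebra all_fingroup.
From mathcomp Require Import zify ring boolp.
Set Implicit Arguments. Unset Strict Implicit. Unset Printing Implicit Defensive.
Module FillM.

Fixpoint fillc (cnt : nat -> nat) (p : seq nat) : seq (nat * nat) :=
  if p is b :: p' then (b, cnt b) :: fillc (fun b' => if b' == b then (cnt b').+1 else cnt b') p'
  else [::].

Lemma mem_fillc p cnt b j :
  ((b, j) \in fillc cnt p) = (cnt b <= j < cnt b + count_mem b p).
Proof.
elim: p cnt => [|b0 p IH] cnt /=; first by rewrite addn0; case: leqP => //= /leq_gtF ->.
rewrite in_cons IH xpair_eqE.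
case: (eqVneq b b0) => [->|bb0] /=; rewrite ?eqxx /= ?(negPf bb0) /=.
  apply/idP/idP.
    by case/orP => [/eqP ->|]; lia.
  by case/andP => H1 H2; case: (eqVneq j (cnt b0)) => [//|ne]; apply/orP; right; lia.
by rewrite add0n.
Qed.

Lemma uniq_fillc p cnt : uniq (fillc cnt p).
Proof.
elim: p cnt => [|b p IH] cnt //=; rewrite IH andbT mem_fillc eqxx; lia.
Qed.

Lemma fillc_ext p cnt cnt' : cnt =1 cnt' -> fillc cnt p = fillc cnt' p.
Proof.
elim: p cnt cnt' => [|b p IH] cnt cnt' E //=; rewrite E; congr (_ :: _).
by apply: IH => b'; rewrite E.
Qed.

Lemma fillc_cat p1 p2 cnt :
  fillc cnt (p1 ++ p2) = fillc cnt p1 ++ fillc (fun b => cnt b + count_mem b p1) p2.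
Proof.
elim: p1 cnt => [|b p1 IH] cnt /=; first by apply: fillc_ext => b; rewrite addn0.
rewrite IH; congr (_ :: _ ++ _); apply: fillc_ext => b' /=.
by case: (eqVneq b' b) => [->|nb]; rewrite ?eqxx /=; lia.
Qed.

Fixpoint run (tr : nat * nat -> nat -> option nat) (ks : seq (nat * nat)) (s : nat) :=
  if ks is k :: ks' then (if tr k s is Some s' then run tr ks' s' else None) else Some s.

Fixpoint runL (tr : nat -> nat -> option nat) (p : seq nat) (s : nat) :=
  if p is b :: p' then (if tr b s is Some s' then runL tr p' s' else None) else Some s.

Lemma run_cat tr ks1 ks2 s :
  run tr (ks1 ++ ks2) s = if run tr ks1 s is Some s' then run tr ks2 s' else None.
Proof. by elim: ks1 s => [|k ks1 IH] s //=; case: (tr k s). Qed.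

Lemma runL_cat tr p1 p2 s :
  runL tr (p1 ++ p2) s = if runL tr p1 s is Some s' then runL tr p2 s' else None.
Proof. by elim: p1 s => [|k p1 IH] s //=; case: (tr k s). Qed.

Section Trans.
Variables (thr : nat -> nat) (bt lt : nat -> nat -> option nat).
Definition trk (k : nat * nat) := if k.2 < thr k.1 then bt k.1 else lt k.1.

Lemma run_small p cnt s : (forall b, thr b <= cnt b) -> run trk (fillc cnt p) s = runL lt p s.
Proof.
elim: p cnt s => [|b p IH] cnt s //= H.
rewrite /trk /= ltnNge H /=; case: (lt b s) => // s'.
by apply: IH => b'; case: eqP => _ //; apply: leqW.
Qed.

Lemma run_big m b cnt s : cnt b + m <= thr b -> bt b s = Some s ->
  run trk (fillc cnt (nseq m b)) s = Some s.
Proof.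
elim: m cnt => [|m IH] cnt //= H E.
rewrite /trk /= (_ : cnt b < thr b); last by lia.
rewrite E IH // eqxx; lia.
Qed.
End Trans.

Definition coreX (x d : nat) : seq nat :=
  if d is m.+1 then x :: flatten (nseq m./2 [:: x; 1; x]) ++ nseq (odd m) x else [::].
Definition alt (x y m : nat) : seq nat := flatten (nseq m [:: x; y]).

Lemma count_flatten_nseq (a : pred nat) m s : count a (flatten (nseq m s)) = m * count a s.
Proof. by elim: m => //= m IH; rewrite count_cat IH mulSn. Qed.

Lemma count_alt b x y m : count_mem b (alt x y m) = m * ((x == b) + (y == b)).
Proof. by rewrite count_flatten_nseq /= addn0. Qed.

Lemma count_coreX b x d :
  count_mem b (coreX x d) = (x == b) * d + (1 == b) * (d.-1)./2.
Proof.
case: d => [|m]; first by rewrite !muln0.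
rewrite /= count_cat count_flatten_nseq count_nseq /= addn0.
have := odd_double_half m; rewrite -!mul2n.
case: (x == b); case: (1 == b) => /=; lia.
Qed.

Section Core.
Variables (lt : nat -> nat -> option nat) (x y s s' : nat).
Hypotheses (H1 : lt x s = Some 0) (H2 : lt y 0 = Some s) (H3 : lt x 0 = Some s')
  (H4 : lt 1 s' = Some s) (H5 : lt 1 s = Some s').

Lemma runL_alt m : runL lt (alt x y m) s = Some s.
Proof. by elim: m => //= m IH; rewrite H1 H2. Qed.

Lemma runL_coreX d : exists s'', runL lt (coreX x d) s = Some s''.
Proof.
case: d => [|m] /=; first by exists s.
rewrite H1 runL_cat.
have -> : runL lt (flatten (nseq m./2 [:: x; 1; x])) 0 = Some 0.
  by elim: (m./2) => //= q IH; rewrite H3 H4 H1.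
by case: (odd m) => /=; [rewrite H3; exists s'|exists 0].
Qed.

Lemma runL_seps E : runL lt (nseq E 1) (if odd E then s' else s) = Some s.
Proof.
elim: E => //= E IH; case: (odd E) IH => /= IH; by rewrite ?H4 ?H5.
Qed.
End Core.

End FillM.
Import FillM.

Module ClM.

Section Cells.
Variables (a0 a1 a2 b0 b1 d0 d1 : nat).
Definition lamX := [:: [::]; [:: a0; a1; a2]; [:: b0; b1]; [:: d0; d1]].

Lemma cellsE : cells lamX =
  [seq (1,0,c) | c <- iota 0 a0] ++ [seq (1,1,c) | c <- iota 0 a1] ++
  [seq (1,2,c) | c <- iota 0 a2] ++ [seq (2,0,c) | c <- iota 0 b0] ++
  [seq (2,1,c) | c <- iota 0 b1] ++ [seq (3,0,c) | c <- iota 0 d0] ++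
  [seq (3,1,c) | c <- iota 0 d1].
Proof. by rewrite /cells /= !cats0 !catA. Qed.

Lemma filt_piece b' r m b j :
  filter (fun t : nat * nat * nat => (t.1.1, t.2) == (b, j)) [seq (b', r, c) | c <- iota 0 m]
  = if (b' == b) && (j < m) then [:: (b', r, j)] else [::].
Proof.
rewrite filter_map.
have -> : filter (preim (fun c => (b', r, c)) (fun t : nat * nat * nat => (t.1.1, t.2) == (b, j)))
            (iota 0 m) = filter (fun c => (b' == b) && (c == j)) (iota 0 m).
  by apply: eq_filter => c /=; rewrite xpair_eqE.
case: (b' == b) => /=; last by rewrite filter_pred0.
case: ltnP => jm.
  by rewrite (@filter_pred1_uniq _ _ j) ?iota_uniq ?mem_iota.
rewrite (@eq_in_filter _ _ pred0) ?filter_pred0 // => c.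
by rewrite mem_iota add0n => /andP[_ cm] /=; apply/negbTE; rewrite neq_ltn (leq_trans cm jm).
Qed.

Lemma colfilt1 j :
  filter (fun t : nat * nat * nat => (t.1.1, t.2) == (1, j)) (cells lamX) =
  (if j < a0 then [:: (1,0,j)] else [::]) ++ (if j < a1 then [:: (1,1,j)] else [::]) ++
  (if j < a2 then [:: (1,2,j)] else [::]).
Proof. by rewrite cellsE !filter_cat !filt_piece /= ?cats0. Qed.

Lemma colfilt2 j :
  filter (fun t : nat * nat * nat => (t.1.1, t.2) == (2, j)) (cells lamX) =
  (if j < b0 then [:: (2,0,j)] else [::]) ++ (if j < b1 then [:: (2,1,j)] else [::]).
Proof. by rewrite cellsE !filter_cat !filt_piece /= ?cats0. Qed.

Lemma colfilt3 j :
  filter (fun t : nat * nat * nat => (t.1.1, t.2) == (3, j)) (cells lamX) =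
  (if j < d0 then [:: (3,0,j)] else [::]) ++ (if j < d1 then [:: (3,1,j)] else [::]).
Proof. by rewrite cellsE !filter_cat !filt_piece /= ?cats0. Qed.

Local Notation n := (size (cells lamX)).

Lemma map_cell_enum : map (@cell lamX) (enum 'I_n) = cells lamX.
Proof.
rewrite -[RHS](mkseq_nth (0, 0, 0)%N) /mkseq -val_enum_ord -map_comp.
by apply: eq_map => i.
Qed.

Lemma map_cell_block k :
  map (@cell lamX) [seq x <- enum 'I_n | @colkey lamX x == k] =
  filter (fun t : nat * nat * nat => (t.1.1, t.2) == k) (cells lamX).
Proof. by rewrite -[in RHS]map_cell_enum filter_map. Qed.

Lemma cell_mem (i : 'I_n) : @cell lamX i \in cells lamX.
Proof. by rewrite /cell mem_nth. Qed.

Lemma colkey_cases (i : 'I_n) : a2 <= a1 <= a0 -> b1 <= b0 -> d1 <= d0 ->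
  let k := @colkey lamX i in
  [|| (k.1 == 1) && (k.2 < a0), (k.1 == 2) && (k.2 < b0) | (k.1 == 3) && (k.2 < d0)].
Proof.
move=> /andP[h1 h2] h3 h4 /=; rewrite /colkey /=.
have := cell_mem i; rewrite cellsE.
case: (@cell lamX i) => [[b r] c] /=.
rewrite !mem_cat => /or4P[| | |/or4P[| | |]] /mapP[c' ]; rewrite mem_iota add0n => /andP[_ hc] [-> _ ->] /=.
all: try (by rewrite hc); try (by rewrite (leq_trans hc)); try (by rewrite (leq_trans hc (leq_trans h1 h2))).
Qed.
End Cells.

End ClM.
Import ClM.

Module GenM.
Import GRing.Theory.
Local Open Scope ring_scope.

Section Small.
Variables (I : finType) (R : nzRingType).

Lemma sum_list (P : pred {perm I}) (L : seq {perm I}) (G : {perm I} -> R) :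
  uniq L -> all P L -> (#|P| <= size L)%N -> \sum_(c | P c) G c = \sum_(c <- L) G c.
Proof.
move=> uL aL cL.
have sub : {subset L <= enum P} by move=> c cL'; rewrite mem_enum; exact: (allP aL).
have [_ eqL] : (size L = size (enum P)) * (L =i enum P).
  by apply: uniq_min_size uL sub _; rewrite -cardE.
transitivity (\sum_(c <- enum P) G c).
  by rewrite big_enum.
apply: perm_big; apply: uniq_perm; [exact: enum_uniq|exact: uL|by move=> c; rewrite eqL].
Qed.

Lemma sum_perm1 (x : I) (G : {perm I} -> R) :
  \sum_(c | perm_on [set x] c) (-1) ^+ odd_perm c * G c = G 1%g.
Proof.
rewrite (@sum_list _ [:: 1%g]) //= ?big_cons ?big_nil ?odd_perm1 ?mul1r ?addr0 //.
  by rewrite perm_on1.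
by rewrite card_perm cards1.
Qed.

Lemma sum_perm2 (x y : I) (G : {perm I} -> R) : x != y ->
  \sum_(c | perm_on [set x; y] c) (-1) ^+ odd_perm c * G c = G 1%g - G (tperm x y).
Proof.
move=> xy.
rewrite (@sum_list _ [:: 1%g; tperm x y]) //= ?big_cons ?big_nil ?odd_perm1 ?odd_tperm ?xy.
- by rewrite mul1r addr0 expr1 mulN1r.
- rewrite inE andbT; apply/eqP => /permP /(_ x); rewrite perm1 tpermL => E.
  by rewrite E eqxx in xy.
- by rewrite perm_on1 tperm_on.
- by rewrite card_perm cards2 xy.
Qed.

Lemma sum_perm3 (x y z : I) (G : {perm I} -> R) : x != y -> x != z -> y != z ->
  \sum_(c | perm_on [set x; y; z] c) (-1) ^+ odd_perm c * G c =
  G 1%g - G (tperm x y) - G (tperm x z) - G (tperm y z)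
  + G (tperm x y * tperm x z)%g + G (tperm x z * tperm x y)%g.
Proof.
move=> xy xz yz.
rewrite (@sum_list _ [:: 1%g; tperm x y; tperm x z; tperm y z;
                        (tperm x y * tperm x z)%g; (tperm x z * tperm x y)%g]).
- rewrite !big_cons big_nil !odd_permM odd_perm1 !odd_tperm xy xz yz /=.
  rewrite !expr0 !expr1 !mul1r !mulN1r addr0 !addrA.
  by [].
- have nxy : (x == y) = false by apply/negbTE.
  have nyx : (y == x) = false by rewrite eq_sym.
  have nxz : (x == z) = false by apply/negbTE.
  have nzx : (z == x) = false by rewrite eq_sym.
  have nyz : (y == z) = false by apply/negbTE.
  have nzy : (z == y) = false by rewrite eq_sym.
  have t1 : tperm x z y = y by rewrite tpermD // eq_sym.
  have t2 : tperm y z x = x by rewrite tpermD // eq_sym.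
  have t3 : tperm x y z = z by rewrite tpermD.
  pose f (c : {perm I}) := (c x, c y).
  apply: (@map_uniq _ _ f).
  rewrite /f /= !permM !perm1 !tpermL !tpermR t1 t2 t3 !tpermR.
  rewrite /= !inE !xpair_eqE ?tpermL ?eqxx /=.
  by rewrite ?nxy ?nyx ?nxz ?nzx ?nyz ?nzy.
- have tp a b : a \in [set x; y; z] -> b \in [set x; y; z] ->
      perm_on [set x; y; z] (tperm a b).
    move=> aS bS; apply: (subset_trans (tperm_on _ _)); apply/subsetP => w.
    by move=> /set2P[] ->.
  have Sx : x \in [set x; y; z] by rewrite !inE eqxx.
  have Sy : y \in [set x; y; z] by rewrite !inE eqxx orbT.
  have Sz : z \in [set x; y; z] by rewrite !inE eqxx !orbT.
  by rewrite /= perm_on1 !perm_onM ?tp.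
- rewrite card_perm (setUC _ [set z]) cardsU1 cards2 !inE negb_or xy.
  by rewrite eq_sym xz eq_sym yz.
Qed.

End Small.

Section Factor.
Variables (I : finType) (K : eqType) (kappa : I -> K) (R : nzRingType) (V : I -> R).

Definition blockk (k : K) := [seq x <- enum I | kappa x == k].
Definition Sk (ks : seq K) : {set I} := [set x | kappa x \in ks].
Definition Cks (ks : seq K) : {set {perm I}} :=
  [set c : {perm I} | perm_on (Sk ks) c && [forall x, kappa (c x) == kappa x]].
Definition Stk (k : K) : R :=
  \sum_(c in Cks [:: k]) (-1) ^+ odd_perm c * \prod_(x <- blockk k) V (c x).

Lemma Cks_key ks c x : c \in Cks ks -> kappa (c x) = kappa x.
Proof. by rewrite inE => /andP[_ /forallP /(_ x) /eqP]. Qed.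

Lemma Cks_on ks c : c \in Cks ks -> perm_on (Sk ks) c.
Proof. by rewrite inE => /andP[]. Qed.

Lemma fact_big ks : uniq ks ->
  \sum_(c in Cks ks) (-1) ^+ odd_perm c * \prod_(x <- flatten (map blockk ks)) V (c x)
  = \prod_(k <- ks) Stk k.
Proof.
elim: ks => [_|k ks IH /= /andP[kks uks]].
  rewrite big_nil /= (big_pred1 1%g) ?odd_perm1 ?big_nil ?mulr1 // => c.
  rewrite /= inE; apply/andP/eqP => [[c0 _]|->].
    apply: (perm_on_id c0); suff -> : Sk [::] = set0 by rewrite cards0.
    by apply/setP=> x; rewrite !inE.
  by split; [exact: perm_on1|apply/forallP=> x; rewrite perm1].
rewrite big_cons -(IH uks) mulr_suml.
have key1 c1 x : c1 \in Cks [:: k] -> (c1 x \in Sk [:: k]) = (x \in Sk [:: k]).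
  by move=> /Cks_on /perm_closed ->.
pose h (p : {perm I} * {perm I}) := (p.1 * p.2)%g.
have disj c1 c2 x : c1 \in Cks [:: k] -> c2 \in Cks ks ->
    (x \in Sk [:: k] -> (c1 * c2)%g x = c1 x) /\ (x \notin Sk [:: k] -> (c1 * c2)%g x = c2 x).
  move=> C1 C2; rewrite permM; split => xS.
    apply: (out_perm (Cks_on C2)); rewrite inE (Cks_key _ C1).
    by move: xS; rewrite !inE => /eqP ->.
  by rewrite (out_perm (Cks_on C1)).
have hinj : {in setX (Cks [:: k]) (Cks ks) &, injective h}.
  move=> [a1 a2] [b1 b2] /setXP[/= A1 A2] /setXP[/= B1 B2] /= eqh.
  have e1 : a1 = b1.
    apply/permP => x; have [xS|xS] := boolP (x \in Sk [:: k]).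
      by have [/(_ xS) <- _] := disj _ _ x A1 A2; have [/(_ xS) <- _] := disj _ _ x B1 B2; move: eqh; rewrite /h /= => ->.
    by rewrite (out_perm (Cks_on A1)) // (out_perm (Cks_on B1)).
  by subst b1; congr (_, _); apply: (mulgI a1).
have himg : h @: setX (Cks [:: k]) (Cks ks) = Cks (k :: ks).
  apply/setP => c; apply/imsetP/idP => [[[c1 c2] /setXP[/= C1 C2] ->]|Cc].
    rewrite inE; apply/andP; split.
      apply: perm_onM.
        apply: subset_trans (Cks_on C1) _; apply/subsetP=> x; rewrite !inE => /eqP->.
        by rewrite eqxx.
      apply: subset_trans (Cks_on C2) _; apply/subsetP=> x; rewrite !inE => ->.
      by rewrite orbT.
    by apply/forallP => x; rewrite /h /= permM (Cks_key _ C2) (Cks_key _ C1).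
  have cP (P : pred I) : (forall x, P (c x) = P x) ->
      injective (fun x => if P x then c x else x).
    move=> cPx x y /=.
    case: ifP => kx; case: ifP => ky.
    - exact: perm_inj.
    - by move=> E; move: kx; rewrite -cPx E ky.
    - by move=> E; move: ky; rewrite -cPx -E kx.
    - by [].
  have cK1 x : (kappa (c x) == k) = (kappa x == k) by rewrite (Cks_key _ Cc).
  have cK2 x : (kappa (c x) != k) = (kappa x != k) by rewrite (Cks_key _ Cc).
  pose c1 := perm (cP _ cK1); pose c2 := perm (cP _ cK2).
  have c1E x : c1 x = if kappa x == k then c x else x by rewrite permE.
  have c2E x : c2 x = if kappa x != k then c x else x by rewrite permE.
  exists (c1, c2); last first.
    apply/permP => x; rewrite /h /= permM c1E c2E.
    have [kx|kx] := eqVneq (kappa x) k.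
      by rewrite cK2 kx eqxx.
    by rewrite kx.
  have Cc' := Cks_on Cc.
  rewrite inE /= !inE; apply/andP; split; apply/andP; split.
  - apply/subsetP => x; rewrite !inE c1E; case: ifP => //.
    by rewrite eqxx.
  - apply/forallP => x; rewrite c1E; case: ifP => // _.
    by rewrite (Cks_key _ Cc).
  - apply/subsetP => x; rewrite !inE c2E; case: ifP => [kx cx|_]; last by rewrite eqxx.
    have := subsetP Cc' x; rewrite !inE cx => /(_ isT).
    by rewrite (negPf kx).
  - apply/forallP => x; rewrite c2E; case: ifP => // _.
    by rewrite (Cks_key _ Cc).
rewrite -himg big_imset //.
pose G := fun c : {perm I} => (-1) ^+ odd_perm c * \prod_(x <- blockk k ++ flatten [seq blockk i | i <- ks]) V (c x).
transitivity (\sum_(a in Cks [:: k]) \sum_(b in Cks ks) G (a * b)%g).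
  rewrite pair_big /=; apply: eq_bigl => -[a b]; by rewrite in_setX.
apply: eq_bigr => a Aa; rewrite mulr_sumr; apply: eq_bigr => b Bb.
rewrite /G /= odd_permM signr_addb big_cat /=.
have -> : \prod_(x <- blockk k) V ((a * b)%g x) = \prod_(x <- blockk k) V (a x).
  rewrite big_seq_cond [RHS]big_seq_cond; apply: eq_bigr => x /andP[xb _].
  have xS : x \in Sk [:: k] by move: xb; rewrite mem_filter !inE => /andP[-> _].
  by have [-> //] := disj a b x Aa Bb.
have -> : \prod_(x <- flatten [seq blockk i | i <- ks]) V ((a * b)%g x) =
          \prod_(x <- flatten [seq blockk i | i <- ks]) V (b x).
  rewrite big_seq_cond [RHS]big_seq_cond; apply: eq_bigr => x /andP[xb _].
  have xS : x \notin Sk [:: k].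
    move: xb => /flattenP[s /mapP[k' k'ks ->]]; rewrite mem_filter => /andP[/eqP kx _].
    rewrite !inE kx; apply: contra kks => /eqP <-; exact: k'ks.
  by have [_ -> //] := disj a b x Aa Bb.
rewrite !mulrA; congr (_ * _); rewrite -!mulrA; congr (_ * _).
exact/esym/commr_sign.
Qed.

Definition st3 (a b c : R) :=
  a * (b * (c * 1)) - b * (a * (c * 1)) - c * (b * (a * 1)) - a * (c * (b * 1))
  + b * (c * (a * 1)) + c * (a * (b * 1)).

Lemma Cks1E k c : (c \in Cks [:: k]) = perm_on (Sk [:: k]) c.
Proof.
rewrite inE; case pc: (perm_on _ c) => //=; apply/forallP => x.
have [xS|xS] := boolP (x \in Sk [:: k]).
  have := xS; rewrite -(perm_closed _ pc) => cxS.
  by move: xS cxS; rewrite !inE => /eqP H1 /eqP H2; rewrite H1 H2.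
by rewrite (out_perm pc xS).
Qed.

Lemma Sk1E k : Sk [:: k] = [set x | x \in blockk k].
Proof. by apply/setP => x; rewrite !inE mem_filter mem_enum andbT. Qed.

Lemma uniq_blockk k : uniq (blockk k).
Proof. exact/filter_uniq/enum_uniq. Qed.

Lemma Stk1 k x : blockk k = [:: x] -> Stk k = V x.
Proof.
move=> bk; rewrite /Stk bk (eq_bigl (fun c => perm_on [set x] c)); last first.
  move=> c; rewrite Cks1E Sk1E bk; congr perm_on; apply/setP => w.
  by rewrite !inE.
by rewrite sum_perm1 big_cons big_nil perm1 mulr1.
Qed.

Lemma Stk2 k x y : blockk k = [:: x; y] -> Stk k = V x * V y - V y * V x.
Proof.
move=> bk; have := uniq_blockk k; rewrite bk /= inE andbT => xy.
rewrite /Stk bk (eq_bigl (fun c => perm_on [set x; y] c)); last first.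
  move=> c; rewrite Cks1E Sk1E bk; congr perm_on; apply/setP => w.
  by rewrite !inE.
by rewrite sum_perm2 // !big_cons !big_nil !perm1 tpermL tpermR !mulr1.
Qed.

Lemma Stk3 k x y z : blockk k = [:: x; y; z] -> Stk k = st3 (V x) (V y) (V z).
Proof.
move=> bk; have := uniq_blockk k; rewrite bk /= !inE !negb_or => /and3P[/andP[xy xz] yz _].
rewrite /Stk bk (eq_bigl (fun c => perm_on [set x; y; z] c)); last first.
  move=> c; rewrite Cks1E Sk1E bk; congr perm_on; apply/setP => w.
  by rewrite !inE orbA.
rewrite sum_perm3 // !big_cons !big_nil !permM !perm1 !tpermL !tpermR.
have t1 : tperm x z y = y by rewrite tpermD // eq_sym.
have t2 : tperm y z x = x by rewrite tpermD // eq_sym.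
have t3 : tperm x y z = z by rewrite tpermD.
by rewrite t1 t2 t3 !tpermL !tpermR.
Qed.

Lemma mem_flat_blocks ks x : (x \in flatten (map blockk ks)) = (kappa x \in ks).
Proof.
elim: ks => [|k ks IH] //=; rewrite mem_cat IH mem_filter mem_enum andbT in_cons.
by rewrite eq_sym.
Qed.

Lemma uniq_flat_blocks ks : uniq ks -> uniq (flatten (map blockk ks)).
Proof.
elim: ks => [|k ks IH] //= /andP[kks uks]; rewrite cat_uniq uniq_blockk IH // andbT.
apply/hasP => -[x]; rewrite mem_flat_blocks => xks.
by rewrite mem_filter => /andP[/eqP xk _]; move: kks; rewrite -xk xks.
Qed.

Lemma perm_flat_blocks ks : uniq ks -> (forall x, kappa x \in ks) ->
  perm_eq (flatten (map blockk ks)) (enum I).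
Proof.
move=> uks allk; apply: uniq_perm; [exact: uniq_flat_blocks|exact: enum_uniq|].
by move=> x; rewrite mem_flat_blocks allk mem_enum.
Qed.

End Factor.

Lemma exists_perm n (w : seq 'I_n) : perm_eq w (enum 'I_n) ->
  exists u : {perm 'I_n}, map u (enum 'I_n) = w.
Proof.
move=> pw; have sw : size w = n by rewrite (perm_size pw) size_enum_ord.
have uw : uniq w by rewrite (perm_uniq pw) enum_uniq.
case: n w pw sw uw => [|m] w pw sw uw.
  by exists 1%g; case: w pw sw uw => //; rewrite enum_ord0.
have finj : injective (fun k : 'I_m.+1 => nth ord0 w k).
  by move=> i j /eqP; rewrite nth_uniq ?sw // => /eqP /val_inj.
exists (perm finj).
rewrite -[RHS](mkseq_nth ord0) sw /mkseq -val_enum_ord -map_comp.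
by apply: eq_map => i /=; rewrite permE.
Qed.

End GenM.
Import GenM.

Module MxM.
Import GRing.Theory.
Local Open Scope ring_scope.

Section Mx.
Variable F : fieldType.
Local Notation mx3 := (@mx3 F).

Lemma mx3E a b c d e f g h k (i j : 'I_3) :
  mx3 a b c d e f g h k i j =
  nth 0 (nth [::] [:: [:: a; b; c]; [:: d; e; f]; [:: g; h; k]] i) j.
Proof. by rewrite mxE. Qed.

Lemma mx3_mul a b c d e f g h k a' b' c' d' e' f' g' h' k' :
  mx3 a b c d e f g h k * mx3 a' b' c' d' e' f' g' h' k' =
  mx3 (a*a'+b*d'+c*g') (a*b'+b*e'+c*h') (a*c'+b*f'+c*k')
      (d*a'+e*d'+f*g') (d*b'+e*e'+f*h') (d*c'+e*f'+f*k')
      (g*a'+h*d'+k*g') (g*b'+h*e'+k*h') (g*c'+h*f'+k*k').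
Proof.
apply/matrixP => i j; rewrite !mxE !big_ord_recr big_ord0 /= !mxE add0r.
by case: i => [[|[|[|//]]] ?]; case: j => [[|[|[|//]]] ?].
Qed.

Lemma mx3_add a b c d e f g h k a' b' c' d' e' f' g' h' k' :
  mx3 a b c d e f g h k + mx3 a' b' c' d' e' f' g' h' k' =
  mx3 (a+a') (b+b') (c+c') (d+d') (e+e') (f+f') (g+g') (h+h') (k+k').
Proof.
apply/matrixP => i j; rewrite !mxE.
by case: i => [[|[|[|//]]] ?]; case: j => [[|[|[|//]]] ?].
Qed.

Lemma mx3_opp a b c d e f g h k :
  - mx3 a b c d e f g h k = mx3 (-a) (-b) (-c) (-d) (-e) (-f) (-g) (-h) (-k).
Proof.
apply/matrixP => i j; rewrite !mxE.
by case: i => [[|[|[|//]]] ?]; case: j => [[|[|[|//]]] ?].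
Qed.

Lemma mx3_scale x a b c d e f g h k :
  x *: mx3 a b c d e f g h k = mx3 (x*a) (x*b) (x*c) (x*d) (x*e) (x*f) (x*g) (x*h) (x*k).
Proof.
apply/matrixP => i j; rewrite !mxE.
by case: i => [[|[|[|//]]] ?]; case: j => [[|[|[|//]]] ?].
Qed.

Lemma mx3_0 : mx3 0 0 0 0 0 0 0 0 0 = 0.
Proof.
apply/matrixP => i j; rewrite !mxE.
by case: i => [[|[|[|//]]] ?]; case: j => [[|[|[|//]]] ?].
Qed.

Lemma superstar_mx3 a b c d e f g h k :
  superstar (mx3 a b c d e f g h k) = mx3 a (-g) d c k (-f) (-b) (-h) e.
Proof. by rewrite /superstar /ent !mxE !inordK. Qed.

Lemma mx3_eq a b c d e f g h k a' b' c' d' e' f' g' h' k' :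
  a = a' -> b = b' -> c = c' -> d = d' -> e = e' -> f = f' -> g = g' -> h = h' -> k = k' ->
  mx3 a b c d e f g h k = mx3 a' b' c' d' e' f' g' h' k'.
Proof. by move=> -> -> -> -> -> -> -> -> ->. Qed.

Definition Y1 := mx3 0 0 0 0 0 1 0 1 0.
Definition Y2 := mx3 0 0 0 0 1 0 0 0 (-1).
Definition Y3 := mx3 0 0 0 0 0 1 0 0 0.
Definition Z1 := mx3 0 1 0 0 0 0 (-1) 0 0.
Definition Z2 := mx3 0 0 1 1 0 0 0 0 0.
Definition W1 := mx3 0 0 1 (-1) 0 0 0 0 0.
Definition W2 := mx3 0 1 0 0 0 0 1 0 0.

Lemma st3Y : st3 Y1 Y2 Y3 = mx3 0 0 0 0 3 0 0 0 3.
Proof.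
rewrite /st3 /Y1 /Y2 /Y3 !mulr1 !mx3_mul !mx3_opp !mx3_add.
by apply: mx3_eq; ring.
Qed.

Lemma C2Y : Y1 * Y2 - Y2 * Y1 = mx3 0 0 0 0 0 (-2) 0 2 0.
Proof. rewrite /Y1 /Y2 !mx3_mul !mx3_opp !mx3_add; by apply: mx3_eq; ring. Qed.

Lemma DZE : Z1 * Z2 - Z2 * Z1 = mx3 2 0 0 0 (-1) 0 0 0 (-1).
Proof. rewrite /Z1 /Z2 !mx3_mul !mx3_opp !mx3_add; by apply: mx3_eq; ring. Qed.

Lemma DWE : W1 * W2 - W2 * W1 = mx3 2 0 0 0 (-1) 0 0 0 (-1).
Proof. rewrite /W1 /W2 !mx3_mul !mx3_opp !mx3_add; by apply: mx3_eq; ring. Qed.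

Definition es (s : nat) : 'M[F]_3 :=
  match s with
  | 0 => mx3 1 0 0 0 0 0 0 0 0
  | 1 => mx3 0 1 0 0 0 0 0 0 0
  | _ => mx3 0 0 1 0 0 0 0 0 0
  end.

Definition TR (tr : nat -> option nat) (M : 'M[F]_3) :=
  forall s s', tr s = Some s' -> exists2 a : F, a != 0 & es s * M = a *: es s'.

Definition idV (s : nat) : option nat := match s with 1 => Some 1 | 2 => Some 2 | _ => None end.
Definition idA (s : nat) : option nat := match s with 0 => Some 0 | 1 => Some 1 | 2 => Some 2 | _ => None end.
Definition swap (s : nat) : option nat := match s with 1 => Some 2 | 2 => Some 1 | _ => None end.
Definition trZ (s : nat) : option nat := match s with 0 => Some 1 | 2 => Some 0 | _ => None end.
Definition trW (s : nat) : option nat := match s with 0 => Some 2 | 1 => Some 0 | _ => None end.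

Variable charF : [pchar F] =i pred0.

Lemma nat_neq0 k : (k.+1)%:R != 0 :> F.
Proof. by rewrite (pcharf0P _).1. Qed.

Lemma TR_C3 : TR idV (st3 Y1 Y2 Y3).
Proof.
rewrite st3Y => s s'; case: s => [|[|[|s]]] //= [<-]; exists 3; rewrite ?nat_neq0 //;
  rewrite !mx3_mul mx3_scale; by apply: mx3_eq; ring.
Qed.

Lemma TR_C2 : TR swap (Y1 * Y2 - Y2 * Y1).
Proof.
rewrite C2Y => s s'; case: s => [|[|[|s]]] //= [<-].
  exists (-2); rewrite ?oppr_eq0 ?nat_neq0 //; rewrite !mx3_mul mx3_scale; by apply: mx3_eq; ring.
exists 2; rewrite ?nat_neq0 //; rewrite !mx3_mul mx3_scale; by apply: mx3_eq; ring.
Qed.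

Lemma TR_Y1 : TR swap Y1.
Proof.
rewrite /Y1 => s s'; case: s => [|[|[|s]]] //= [<-]; exists 1; rewrite ?oner_neq0 //;
  rewrite !mx3_mul mx3_scale; by apply: mx3_eq; ring.
Qed.

Lemma TR_D M : M = mx3 2 0 0 0 (-1) 0 0 0 (-1) -> TR idA M.
Proof.
move=> -> s s'; case: s => [|[|[|s]]] //= [<-].
- exists 2; rewrite ?nat_neq0 //; rewrite !mx3_mul mx3_scale; by apply: mx3_eq; ring.
- exists (-1); rewrite ?oppr_eq0 ?oner_neq0 //; rewrite !mx3_mul mx3_scale; by apply: mx3_eq; ring.
- exists (-1); rewrite ?oppr_eq0 ?oner_neq0 //; rewrite !mx3_mul mx3_scale; by apply: mx3_eq; ring.
Qed.

Lemma TR_Z1 : TR trZ Z1.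
Proof.
rewrite /Z1 => s s'; case: s => [|[|[|s]]] //= [<-].
  exists 1; rewrite ?oner_neq0 //; rewrite !mx3_mul mx3_scale; by apply: mx3_eq; ring.
exists (-1); rewrite ?oppr_eq0 ?oner_neq0 //; rewrite !mx3_mul mx3_scale; by apply: mx3_eq; ring.
Qed.

Lemma TR_W1 : TR trW W1.
Proof.
rewrite /W1 => s s'; case: s => [|[|[|s]]] //= [<-].
  exists 1; rewrite ?oner_neq0 //; rewrite !mx3_mul mx3_scale; by apply: mx3_eq; ring.
exists (-1); rewrite ?oppr_eq0 ?oner_neq0 //; rewrite !mx3_mul mx3_scale; by apply: mx3_eq; ring.
Qed.

Lemma in_part0 t : in_part t (0 : 'M[F]_3).
Proof.
rewrite -mx3_0 /in_part /is_even /is_odd /ent !mxE !inordK //= superstar_mx3 mx3_opp !oppr0 eqxx.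
by case: t => [|[|[|t]]] /=; apply/eqP.
Qed.

Lemma in_part_Y : [/\ in_part 1 Y1, in_part 1 Y2 & in_part 1 Y3].
Proof.
rewrite /in_part /is_even /Y1 /Y2 /Y3 /ent !mxE !inordK //= !superstar_mx3 !mx3_opp !oppr0 !opprK !eqxx.
by [].
Qed.

Lemma in_part_Z : in_part 2 Z1 /\ in_part 2 Z2.
Proof.
rewrite /in_part /is_odd /Z1 /Z2 /ent !mxE !inordK //= !superstar_mx3 !eqxx.
by split; apply/eqP; apply: mx3_eq; rewrite ?oppr0 ?opprK.
Qed.

Lemma in_part_W : in_part 3 W1 /\ in_part 3 W2.
Proof.
rewrite /in_part /is_odd /W1 /W2 /ent !mxE !inordK //= !superstar_mx3 !mx3_opp !eqxx.
by split; apply/eqP; apply: mx3_eq; rewrite ?oppr0 ?opprK.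
Qed.

End Mx.

End MxM.
Import MxM.

Module EvM.
Import GRing.Theory.
Local Open Scope ring_scope.

Section Ev.
Variable F : fieldType.
Variable lam : seq (seq nat).
Local Notation n := (size (cells lam)).

Lemma eval_young (u0 : {perm 'I_n}) (A : 'I_n -> 'M[F]_3) :
  (forall r, r \in rowgrp lam -> forall i, A (r i) = A i) ->
  eval (@young F lam [ffun s => (s == u0)%:R]) A =
  #|rowgrp lam|%:R *: \sum_(c in colgrp lam) (-1) ^+ odd_perm c *: \prod_(k < n) A (c (u0 k)).
Proof.
move=> AR.
rewrite /eval.
under eq_bigr => s _ do rewrite ffunE scaler_suml.
rewrite exchange_big /=.
transitivity (\sum_(r in rowgrp lam) \sum_(c in colgrp lam)
                 (-1) ^+ odd_perm c *: \prod_(k < n) A (c (u0 k))).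
  apply: eq_bigr => r Rr.
  under eq_bigr => s _ do rewrite scaler_suml.
  rewrite exchange_big /=; apply: eq_bigr => c Cc.
  rewrite (bigD1 (u0 * c * r)%g) //= [X in _ + X]big1 ?addr0.
    rewrite /act !ffunE !mulgK eqxx mulr1.
    congr (_ *: _); apply: eq_bigr => k _; rewrite !permM AR //.
  move=> s ns; rewrite /act !ffunE.
  case: eqP => [E|_]; last by rewrite mulr0 scale0r.
  by move: ns; rewrite -E !mulgKV eqxx.
by rewrite sumr_const scaler_nat.
Qed.
End Ev.

End EvM.
Import EvM.

Module MainM.
Import GRing.Theory.
Local Open Scope ring_scope.

Lemma map3 (T U : Type) (f : T -> U) s u0 u1 u2 : map f s = [:: u0; u1; u2] ->
  exists x y z, [/\ s = [:: x; y; z], f x = u0, f y = u1 & f z = u2].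
Proof. by case: s => [|x [|y [|z [|? ?]]]] //= [<- <- <-]; exists x, y, z. Qed.
Lemma map2 (T U : Type) (f : T -> U) s u0 u1 : map f s = [:: u0; u1] ->
  exists x y, [/\ s = [:: x; y], f x = u0 & f y = u1].
Proof. by case: s => [|x [|y [|? ?]]] //= [<- <-]; exists x, y. Qed.
Lemma map1 (T U : Type) (f : T -> U) s u0 : map f s = [:: u0] ->
  exists x, s = [:: x] /\ f x = u0.
Proof. by case: s => [|x [|? ?]] //= [<-]; exists x. Qed.

Section Main.
Variable F : fieldType.
Variable charF : [pchar F] =i pred0.

Lemma propag (tr : nat * nat -> nat -> option nat) (M : nat * nat -> 'M[F]_3) ks s s' :
  (forall k, k \in ks -> TR (tr k) (M k)) -> run tr ks s = Some s' ->
  exists2 a : F, a != 0 & es F s * \prod_(k <- ks) M k = a *: es F s'.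
Proof.
elim: ks s => [|k ks IH] s H /=.
  by case=> <-; exists 1; rewrite ?oner_neq0 // big_nil mulr1 scale1r.
case E: (tr k s) => [s1|] // R.
have [a a0 Ea] := H k (mem_head _ _) s s1 E.
have [b b0 Eb] := IH s1 (fun k' kin => H k' (mem_behead (s := k :: ks) kin)) R.
exists (a * b); first by rewrite mulf_neq0.
by rewrite big_cons mulrA Ea -scalerAl Eb scalerA.
Qed.

Lemma es_neq0 s : es F s != 0.
Proof.
case: s => [|[|s]] /=; apply/eqP => /matrixP.
- by move/(_ 0 0); rewrite !mxE /= => /eqP; rewrite oner_eq0.
- by move/(_ 0 1); rewrite !mxE /= => /eqP; rewrite oner_eq0.
- by move/(_ 0 2); rewrite !mxE /= => /eqP; rewrite oner_eq0.
Qed.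

Variables g1 g2 g3 w1 w2 r1 r2 : nat.
Definition lamM := lamX (g1 + g2 + g3) (g2 + g3) g3 (w1 + w2) w2 (r1 + r2) r2.
Local Notation n := (size (cells lamM)).

Definition Mx (br : nat * nat) : 'M[F]_3 :=
  if br == (1, 0)%N then Y1 F else if br == (1, 1)%N then Y2 F else if br == (1, 2)%N then Y3 F
  else if br == (2, 0)%N then Z1 F else if br == (2, 1)%N then Z2 F
  else if br == (3, 0)%N then W1 F else if br == (3, 1)%N then W2 F else 0.

Definition AA (i : 'I_n) : 'M[F]_3 := Mx (@rowkey lamM i).

Definition thr (b : nat) : nat := (match b with 1 => g3 | 2 => w2 | 3 => r2 | _ => 0 end)%N.
Definition bt (b : nat) : nat -> option nat := if b == 1%N then idV else idA.
Definition lt (b : nat) : nat -> option nat :=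
  (match b with 1 => swap | 2 => trZ | 3 => trW | _ => fun _ => None end)%N.
Definition tk := trk thr bt lt.

Local Notation StK := (Stk (@colkey lamM) AA).
Local Notation blkK := (blockk (@colkey lamM)).

Lemma TR_Stk k : (k.1 == 1%N -> (k.2 < g1 + g2 + g3)%N) ->
  (k.1 == 2%N -> (k.2 < w1 + w2)%N) -> (k.1 == 3%N -> (k.2 < r1 + r2)%N) ->
  TR (tk k) (StK k).
Proof.
case: k => b j /= h1 h2 h3.
have mc := map_cell_block (g1 + g2 + g3) (g2 + g3) g3 (w1 + w2) w2 (r1 + r2) r2 (b, j).
rewrite /tk /trk /=.
case: b h1 h2 h3 mc => [|[|[|[|b]]]] h1 h2 h3 mc; try by move=> s s'.
- have {h1}hj := h1 isT; rewrite colfilt1 in mc.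
  case: (ltnP j g3) => j3.
    rewrite (leq_trans j3 (leq_addl _ _)) (leq_trans j3 (leq_addl _ _)) j3 /= in mc.
    have [x [y [z [bk cx cy cz]]]] := map3 mc.
    rewrite (Stk3 AA bk) /AA /rowkey cx cy cz /=.
    exact: TR_C3 charF.
  case: (ltnP j (g2 + g3)) => j23.
    rewrite hj j23 ltnNge j3 /= in mc.
    have [x [y [bk cx cy]]] := map2 mc.
    rewrite (Stk2 AA bk) /AA /rowkey cx cy /=.
    exact: TR_C2 charF.
  rewrite hj ltnNge j23 ltnNge j3 /= in mc.
  have [x [bk cx]] := map1 mc.
  rewrite (Stk1 AA bk) /AA /rowkey cx /=.
  exact: TR_Y1.
- have {h2}hj := h2 isT; rewrite colfilt2 in mc.
  case: (ltnP j w2) => j2.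
    rewrite (leq_trans j2 (leq_addl _ _)) j2 /= in mc.
    have [x [y [bk cx cy]]] := map2 mc.
    rewrite (Stk2 AA bk) /AA /rowkey cx cy /=.
    rewrite /Mx /=; exact: (TR_D charF (DZE F)).
  rewrite hj ltnNge j2 /= in mc.
  have [x [bk cx]] := map1 mc.
  rewrite (Stk1 AA bk) /AA /rowkey cx /=.
  exact: TR_Z1.
- have {h3}hj := h3 isT; rewrite colfilt3 in mc.
  case: (ltnP j r2) => j2.
    rewrite (leq_trans j2 (leq_addl _ _)) j2 /= in mc.
    have [x [y [bk cx cy]]] := map2 mc.
    rewrite (Stk2 AA bk) /AA /rowkey cx cy /=.
    rewrite /Mx /=; exact: (TR_D charF (DWE F)).
  rewrite hj ltnNge j2 /= in mc.
  have [x [bk cx]] := map1 mc.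
  rewrite (Stk1 AA bk) /AA /rowkey cx /=.
  exact: TR_W1.
Qed.

Definition dd := absdiff w1 r1.
Definition seps := (dd.-1)./2.
Definition EE := (g1 + g2 - seps)%N.
Definition core := if (r1 <= w1)%N then alt 2 3 r1 ++ coreX 2 dd else alt 3 2 w1 ++ coreX 3 dd.
Definition pat := nseq w2 2%N ++ nseq r2 3%N ++ nseq g3 1%N ++ (nseq EE 1%N ++ core).
Definition ks := fillc (fun _ => 0%N) pat.
Definition s_init : nat :=
  if (r1 <= w1)%N then (if odd EE then 1 else 2)%N else (if odd EE then 2 else 1)%N.

Lemma count_pat1 : (seps <= g1 + g2)%N -> count_mem 1%N pat = (g1 + g2 + g3)%N.
Proof.
move=> hs; rewrite /pat /core !count_cat !count_nseq /=.
by case: ifP => _; rewrite count_cat count_alt count_coreX /= -/seps /EE; lia.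
Qed.

Lemma count_pat2 : count_mem 2%N pat = (w1 + w2)%N.
Proof.
rewrite /pat /core !count_cat !count_nseq /=.
by case: ifP => h; rewrite count_cat count_alt count_coreX /= /dd /absdiff; lia.
Qed.

Lemma count_pat3 : count_mem 3%N pat = (r1 + r2)%N.
Proof.
rewrite /pat /core !count_cat !count_nseq /=.
by case: ifP => h; rewrite count_cat count_alt count_coreX /= /dd /absdiff; lia.
Qed.

Lemma mem_ks b j : ((b, j) \in ks) = (j < count_mem b pat)%N.
Proof. by rewrite /ks mem_fillc. Qed.

Lemma run_ks : exists sf, run tk ks s_init = Some sf.
Proof.
have hb b : bt b s_init = Some s_init.
  by rewrite /bt /s_init; case: ifP; case: ifP; case: odd.
rewrite /ks /pat 3!fillc_cat.
rewrite run_cat run_big /= ?count_nseq /= ?addn0 ?hb //.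
rewrite run_cat run_big /= ?count_nseq /= ?addn0 ?hb //.
rewrite run_cat run_big /= ?count_nseq /= ?addn0 ?hb //.
rewrite run_small; last first.
  by case=> [|[|[|[|b]]]] /=; rewrite ?count_nseq /= ?addn0 ?add0n ?muln1 ?mul1n ?muln0.
rewrite runL_cat /s_init /core; case: ifP => h.
  rewrite (@runL_seps lt 2 1) //; rewrite runL_cat (@runL_alt lt 2 3 2) //.
  by have [s'' ->] := @runL_coreX lt 2 2 1 erefl erefl erefl dd; exists s''.
rewrite (@runL_seps lt 1 2) //; rewrite runL_cat (@runL_alt lt 3 2 1) //.
by have [s'' ->] := @runL_coreX lt 3 1 2 erefl erefl erefl dd; exists s''.
Qed.

Lemma keys_in (i : 'I_n) : (seps <= g1 + g2)%N -> @colkey lamM i \in ks.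
Proof.
move=> hs.
have h1 : (g3 <= g2 + g3 <= g1 + g2 + g3)%N by apply/andP; split; lia.
have := @colkey_cases (g1 + g2 + g3) (g2 + g3) g3 (w1 + w2) w2 (r1 + r2) r2 i h1
  (leq_addl _ _) (leq_addl _ _).
case: (@colkey lamM i) => b j /= /or3P[] /andP[/eqP -> hj]; rewrite mem_ks.
- by rewrite count_pat1.
- by rewrite count_pat2.
- by rewrite count_pat3.
Qed.

Lemma TR_ks k : (seps <= g1 + g2)%N -> k \in ks -> TR (tk k) (StK k).
Proof.
case: k => b j hs; rewrite mem_ks => hj; apply: TR_Stk => /= /eqP E; move: hj; rewrite E.
- by rewrite count_pat1.
- by rewrite count_pat2.
- by rewrite count_pat3.
Qed.

Lemma in_part_AA (i : 'I_n) : in_part (@blk lamM i) (AA i).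
Proof.
rewrite /AA /blk /rowkey; case: (@cell lamM i) => [[b r] c] /=.
have [hY1 hY2 hY3] := in_part_Y F; have [hZ1 hZ2] := in_part_Z F; have [hW1 hW2] := in_part_W F.
rewrite /Mx; repeat case: ifP => [/eqP [-> _] //|_].
exact: in_part0.
Qed.

Lemma main_mult : (seps <= g1 + g2)%N -> mult F lamM != 0%N.
Proof.
move=> hs.
have [sf Hrun] := run_ks.
have uks : uniq ks := uniq_fillc _ _.
have pw := perm_flat_blocks uks (fun i => keys_in i hs).
have [u0 Hu0] := exists_perm pw.
have [a a0 HT] := propag (fun k kin => TR_ks hs kin) Hrun.
have Tne : \prod_(k <- ks) StK k != 0.
  apply/eqP => T0; move: HT; rewrite T0 mulr0 => /esym/eqP.
  by rewrite scaler_eq0 (negPf a0) (negPf (es_neq0 _)).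
have fb := fact_big (@colkey lamM) AA uks.
have Cset : colgrp lamM = Cks (@colkey lamM) ks.
  apply/setP => c; rewrite !inE (_ : perm_on _ c = true) //.
  by apply/subsetP => x _; rewrite inE keys_in.
have Tdef : \sum_(c in colgrp lamM) (-1) ^+ odd_perm c *: \prod_(k < n) AA (c (u0 k))
            = \prod_(k <- ks) StK k.
  rewrite Cset -fb; apply: eq_bigr => c _; rewrite scaler_sign mulr_sign.
  suff -> : \prod_(k < n) AA (c (u0 k)) = \prod_(x <- flatten (map blkK ks)) AA (c x) by [].
  by rewrite -Hu0 big_map enumT; unlock.
have Hev := @eval_young F lamM u0 AA.
have AR : forall r, r \in rowgrp lamM -> forall i, AA (r i) = AA i.
  by move=> r; rewrite inE => /forallP H i; rewrite /AA (eqP (H i)).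
have Rne : (#|rowgrp lamM|%:R : F) != 0.
  rewrite (pcharf0P _).1 // -lt0n; apply/card_gt0P; exists 1%g.
  by rewrite inE; apply/forallP => i; rewrite perm1.
have Ene : eval (@young F lamM [ffun s => (s == u0)%:R]) AA != 0.
  by rewrite Hev // Tdef scaler_eq0 negb_or Rne Tne.
have MG : mult_ge F lamM 1.
  exists (fun _ => [ffun s => (s == u0)%:R]) => cs Hid j.
  have := Hid AA in_part_AA.
  rewrite (_ : eval _ AA = cs ord0 *: eval (@young F lamM [ffun s => (s == u0)%:R]) AA).
    by move/eqP; rewrite scaler_eq0 (negPf Ene) orbF => /eqP; rewrite (ord1 j).
  rewrite /eval scaler_sumr; apply: eq_bigr => s _.
  by rewrite ffunE big_ord1 scalerA.
have H1 : (1 < (factorial n).+1)%N by rewrite ltnS fact_gt0.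
have := @leq_bigmax_cond _ (fun k : 'I_(factorial n).+1 => `[< mult_ge F lamM k >])
  (fun k => nat_of_ord k) (Ordinal H1) (asboolT MG).
by rewrite /mult -lt0n.
Qed.

End Main.

End MainM.
Import MainM.

Theorem proposition5p12 (F : fieldType) (charF0 : [pchar F]%R =i pred0)
    (g1 g2 g3 w1 w2 r1 r2 : nat) :
  let lam2 := [:: g1 + g2 + g3; g2 + g3; g3] in
  let lam3 := [:: w1 + w2; w2] in
  let lam4 := [:: r1 + r2; r2] in
  sumn lam2 != 0 -> sumn lam3 != 0 -> sumn lam4 != 0 ->
  let l := maxn w1 r1 in
  (absdiff w1 r1 <= 2) || ((3 <= absdiff w1 r1) && (uphalf l - 1 <= g1 + g2)) ->
  mult F [:: [::]; lam2; lam3; lam4] != 0.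
Proof.
move=> lam2 lam3 lam4 _ _ _ l hyp.
have hs : seps w1 r1 <= g1 + g2.
  rewrite /seps /dd leq_half_double.
  case/orP: hyp => [h|/andP[h3 h]]; first lia.
  have := odd_double_half l.+1; rewrite -uphalfE /l /absdiff in h h3 *.
  case: (odd _) => /=; lia.
exact: (main_mult charF0 g3 w2 r2 hs).
Qed.
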